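(* Let $G$ be any group and $f:G\to\mathbb R_{\ge0}$ a subadditive function ($f(xy)\le f(x)+f(y)$ for all $x,y$) with $f(x)=0$ iff $x=\mathrm{id}$, and suppose $f(h^{-1}gh)=f(g)$ for all $g,h\in G$. Then for any $x\le_f z$ in $G$, the map $y\mapsto xy^{-1}z$ maps the interval $[x,z]_f=\{y: x\le_f y\le_f z\}$ to itself and is a poset antiautomorphism of $[x,z]_f$.
   Context: For such $f$, $x\le_f y$ means $f(x)+f(x^{-1}y)=f(y)$; this is a partial order on $G$. *)

(* Defs.v *)
From HB Require Import structures.
From mathcomp Require Import all_boot all_order all_algebra.
From mathcomp Require Import reals.
Set Implicit Arguments. Unset Strict Implicit. Unset Printing Implicit Defensive.
Import Order.TTheory GRing.Theory Num.Theory.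

Definition le_f (R : realType) (G : groupType) (f : G -> R) (x y : G) : Prop :=
  (f x + f (x^-1 * y)%g = f y)%R.

Definition f_interval (R : realType) (G : groupType) (f : G -> R) (x z : G) : G -> Prop :=
  fun y => le_f f x y /\ le_f f y z.

Definition antiautomorphism_on (T : Type) (le : T -> T -> Prop) (S : T -> Prop)
    (phi : T -> T) : Prop :=
  [/\ (forall y, S y -> S (phi y)),
      (forall y1 y2, S y1 -> S y2 -> phi y1 = phi y2 -> y1 = y2),
      (forall w, S w -> exists2 y, S y & phi y = w) &
      (forall y1 y2, S y1 -> S y2 -> (le y1 y2 <-> le (phi y2) (phi y1)))].

(* Main.v *)
Require Import Defs.
From HB Require Import structures.
From mathcomp Require Import all_boot all_order all_algebra.
From mathcomp Require Import reals.
From mathcomp Require Import lra.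
Import Order.TTheory GRing.Theory Num.Theory.
Local Open Scope ring_scope.

Ltac gsimpl := rewrite ?invgM ?invgK -?mulgA;
  repeat (rewrite ?mulKg ?mulVKg ?mulgV ?mulVg ?mulg1 ?mul1g).

Theorem mainTheorem3 (R : realType) (G : groupType) (f : G -> R)
  (f_ge0 : forall x, 0 <= f x)
  (f_subadd : forall x y, f (x * y)%g <= f x + f y)
  (f_eq0 : forall x, f x = 0 <-> x = 1%g)
  (f_conj : forall g h, f (h^-1 * g * h)%g = f g) :
  forall x z : G, le_f f x z ->
    antiautomorphism_on (le_f f) (f_interval f x z) (fun y => (x * y^-1 * z)%g).
Proof.
move=> x z; rewrite /le_f => hxz.
have conjL : forall g h, f (h * g * h^-1)%g = f g.
  by move=> g h; have := f_conj g (h^-1)%g; rewrite invgK.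
have inS : forall y, f_interval f x z y ->
    f_interval f x z (x * y^-1 * z)%g /\ f (x * y^-1 * z)%g = f x + f z - f y.
  move=> y [h1 h2]; rewrite /le_f in h1 h2.
  have ya : y = (x * (x^-1 * y))%g by gsimpl.
  have zb : z = (y * (y^-1 * z))%g by gsimpl.
  move: (x^-1 * y)%g ya h1 => a ya h1.
  move: (y^-1 * z)%g zb h2 => b zb h2.
  subst z; subst y.
  have e1 : (x^-1 * (x * a * b))%g = (a * b)%g by gsimpl.
  have e2 : (x * (x * a)^-1 * (x * a * b))%g = (x * b)%g by gsimpl.
  have e3 : (x^-1 * (x * b))%g = b by gsimpl.
  have e4 : ((x * b)^-1 * (x * a * b))%g = (b^-1 * a * b)%g by gsimpl.
  have ez : (x * a * b)%g = (x * b * (b^-1 * a * b))%g by gsimpl.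
  have fc : f (b^-1 * a * b)%g = f a by apply: f_conj.
  have s1 := f_subadd (x * b)%g (b^-1 * a * b)%g.
  have s2 := f_subadd x b.
  rewrite -ez fc in s1.
  rewrite e1 in hxz.
  rewrite e2 /f_interval /le_f e3 e4 fc; split; [split|]; lra.
split.
- by move=> y /inS [].
- move=> y1 y2 _ _ /(congr1 (fun t => x^-1 * t * z^-1)%g) /=.
  rewrite (_ : x^-1 * (x * y1^-1 * z) * z^-1 = y1^-1)%g; last by gsimpl.
  rewrite (_ : x^-1 * (x * y2^-1 * z) * z^-1 = y2^-1)%g; last by gsimpl.
  exact: invg_inj.
- move=> w [h1 h2]; rewrite /le_f in h1 h2.
  exists (z * w^-1 * x)%g; last by gsimpl.
  have wa : w = (x * (x^-1 * w))%g by gsimpl.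
  have zb : z = (w * (w^-1 * z))%g by gsimpl.
  move: (x^-1 * w)%g wa h1 => a wa h1.
  move: (w^-1 * z)%g zb h2 => b zb h2.
  subst z; subst w.
  rewrite (_ : x^-1 * (x * a * b) = a * b)%g in hxz; last by gsimpl.
  have ey : (x^-1 * (x * a * b * (x * a)^-1 * x))%g = (a * b * a^-1)%g by gsimpl.
  have ey2 : ((x * a * b * (x * a)^-1 * x)^-1 * (x * a * b))%g = a by gsimpl.
  have ey3 : (x * a * b)%g = ((x * a * b * (x * a)^-1 * x) * a)%g by gsimpl.
  have ey4 : (x * (a * b * a^-1))%g = (x * a * b * (x * a)^-1 * x)%g by gsimpl.
  have fc := conjL b a.
  have s1 := f_subadd (x * a * b * (x * a)^-1 * x)%g a.
  rewrite -ey3 in s1.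
  have s2 := f_subadd x (a * b * a^-1)%g.
  rewrite ey4 fc in s2.
  rewrite /f_interval /le_f ey ey2 fc; split; lra.
- move=> y1 y2 S1 S2; rewrite /le_f.
  have [_ e1] := inS y1 S1; have [_ e2] := inS y2 S2.
  have ed : ((x * y2^-1 * z)^-1 * (x * y1^-1 * z))%g
      = (z^-1 * (y1 * (y1^-1 * y2) * y1^-1) * z)%g by gsimpl.
  rewrite ed f_conj conjL.
  split; lra.
Qed.
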